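(* Let $G=(V,E)$ be a reduced undirected graph (parallel edges allowed) with terminals $s,t$. Every feedback edge set $F\subseteq E$ of $G$ is a tracking edge set for $G$.
   Context: An $s$-$t$ path is a simple path from $s$ to $t$. A set $T\subseteq E$ is a tracking edge set if for any two distinct $s$-$t$ paths $P_1,P_2$, the sequence of edges of $T\cap E(P_1)$ in the order traversed along $P_1$ differs from the sequence of edges of $T\cap E(P_2)$ in the order traversed along $P_2$. A graph is reduced if every vertex and every edge lies on at least one $s$-$t$ path. A feedback edge set is a set of edges whose removal makes the graph acyclic. *)

(* Defs.v *)
(* Undirected multigraph: finite vertex type V, finite edge
   type E, each edge e has an (unordered) pair of endpoints given by ends e. *)
From mathcomp Require Import all_boot.
Set Implicit Arguments. Unset Strict Implicit. Unset Printing Implicit Defensive.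

Section Graph.
Variables (V E : finType) (ends : E -> V * V).

Definition joins (e : E) (x y : V) : bool :=
  (ends e == (x, y)) || (ends e == (y, x)).

Fixpoint is_walk (v : V) (vs : seq V) (es : seq E) : bool :=
  match vs, es with
  | [::], [::] => true
  | w :: vs', e :: es' => joins e v w && is_walk w vs' es'
  | _, _ => false
  end.

(* A walk is the pair (vertex sequence v0 :: vs, edge sequence es). *)
Definition walk := (V * seq V * seq E)%type.

Definition is_st_path (s t : V) (P : walk) : bool :=
  let: (v0, vs, es) := P in
  [&& v0 == s, last v0 vs == t, is_walk v0 vs es & uniq (v0 :: vs)].

Definition is_cycle (P : walk) : bool :=
  let: (v0, vs, es) := P in
  [&& es != [::], is_walk v0 vs es, last v0 vs == v0, uniq vs & uniq es].

Definition path_edges (P : walk) : seq E := P.2.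
Definition path_vertices (P : walk) : seq V := P.1.1 :: P.1.2.

Definition reduced (s t : V) : Prop :=
  (forall v : V, exists P, is_st_path s t P /\ v \in path_vertices P) /\
  (forall e : E, exists P, is_st_path s t P /\ e \in path_edges P).

Definition feedback_edge_set (F : {set E}) : Prop :=
  forall C : walk, is_cycle C -> has (fun e => e \in F) (path_edges C).

Definition tracking_edge_set (s t : V) (T : {set E}) : Prop :=
  forall P1 P2 : walk, is_st_path s t P1 -> is_st_path s t P2 -> P1 <> P2 ->
    [seq e <- path_edges P1 | e \in T] <> [seq e <- path_edges P2 | e \in T].

End Graph.

(* Main.v *)
Require Import Defs.
From mathcomp Require Import all_boot.
Set Implicit Arguments. Unset Strict Implicit. Unset Printing Implicit Defensive.

Section Proof.
Variables (V E : finType) (ends : E -> V * V) (F : {set E}).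
Hypothesis HF : feedback_edge_set ends F.

Notation joins := (joins ends).
Notation is_walk := (is_walk ends).

Lemma joinsC e x y : joins e x y = joins e y x.
Proof. by rewrite /Defs.joins orbC. Qed.

Lemma joins_inj e x y y' : joins e x y -> joins e x y' -> y = y'.
Proof.
rewrite /Defs.joins => /orP[] /eqP -> /orP[] /eqP [] //; congruence.
Qed.

Lemma joins_swap e x y x' y' : joins e x y -> joins e x' y' -> x <> x' ->
  x = y' /\ y = x'.
Proof.
rewrite /Defs.joins => /orP[] /eqP -> /orP[] /eqP [] //; intros; subst; tauto.
Qed.

Lemma joins_end e x y : joins e x y -> x = (ends e).1 \/ x = (ends e).2.
Proof. by rewrite /Defs.joins => /orP[] /eqP ->; auto. Qed.

Lemma walk_size x vs es : is_walk x vs es -> size vs = size es.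
Proof.
elim: es x vs => [|e es IH] x [|w vs] //= /andP[_ H]; by rewrite (IH _ _ H).
Qed.

Lemma walk_cat x vs1 es1 vs2 es2 : size vs1 = size es1 ->
  is_walk x (vs1 ++ vs2) (es1 ++ es2) = is_walk x vs1 es1 && is_walk (last x vs1) vs2 es2.
Proof.
elim: vs1 es1 x => [|w vs1 IH] [|e es1] x //= [Hs].
by rewrite IH // andbA.
Qed.

Lemma walk_ends x vs es e : is_walk x vs es -> e \in es ->
  ((ends e).1 \in x :: vs) && ((ends e).2 \in x :: vs).
Proof.
elim: es x vs => [|e0 es IH] x [|w vs] //= /andP[J W].
rewrite inE => /orP[/eqP->|].
  move: J; rewrite /Defs.joins => /orP[] /eqP -> /=; by rewrite !inE !eqxx !orbT.
move=> /(IH _ _ W) /andP[H1 H2].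
by rewrite !inE in H1 H2 *; rewrite H1 H2 !orbT.
Qed.

Lemma walk_uniq_edges x vs es : is_walk x vs es -> uniq (x :: vs) -> uniq es.
Proof.
elim: es x vs => [|e es IH] x [|w vs] //= /andP[J W] /andP[Hx Hu].
rewrite (IH _ _ W Hu) andbT; apply/negP => He.
have /andP[H1 H2] := walk_ends W He.
by case: (joins_end J) => Ex; rewrite Ex ?H1 ?H2 in Hx.
Qed.

Definition nonF (e : E) := e \notin F.

Lemma nonF_unique e e' x y : nonF e -> nonF e' -> joins e x y -> joins e' x y -> e = e'.
Proof.
rewrite /nonF => He He' J J'.
case: (x =P y) => [Exy|Nxy].
  subst y.
  have := @HF (x, [:: x], [:: e]) .
  rewrite /= J eqxx /= => /(_ isT); rewrite orbF => H; by rewrite H in He.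
case: (e =P e') => // Nee.
have := @HF (x, [:: y; x], [:: e; e']).
rewrite /= J -joinsC J' eqxx /= !inE orbF.
have -> : (y != x) by apply/eqP => H; apply: Nxy.
have -> : (e != e') by apply/eqP.
move=> /(_ isT) /orP[H|H]; [by rewrite H in He | by rewrite H in He'].
Qed.

Definition Rf : rel V := fun x y => [exists e, nonF e && joins e x y].

Lemma Rf_sym x y : Rf x y = Rf y x.
Proof.
by apply/existsP/existsP => -[e /andP[h j]]; exists e; rewrite h -joinsC.
Qed.

Lemma walk_path x vs es : is_walk x vs es -> all nonF es -> path Rf x vs.
Proof.
elim: es x vs => [|e es IH] x [|w vs] //= /andP[J W] /andP[He Hes].
rewrite (IH _ _ W Hes) andbT; apply/existsP; exists e; by rewrite He.
Qed.

Lemma path_walk x vs : path Rf x vs -> exists es, is_walk x vs es /\ all nonF es.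
Proof.
elim: vs x => [|w vs IH] x /=; first by exists [::].
move=> /andP[/existsP[e /andP[He J]] /IH[es [W A]]].
by exists (e :: es); rewrite /= J W He A.
Qed.

Lemma same_edges x vs es1 es2 : is_walk x vs es1 -> is_walk x vs es2 ->
  all nonF es1 -> all nonF es2 -> es1 = es2.
Proof.
elim: vs x es1 es2 => [|w vs IH] x [|e1 es1] [|e2 es2] //= /andP[J1 W1] /andP[J2 W2]
  /andP[H1 A1] /andP[H2 A2].
by rewrite (nonF_unique H1 H2 J1 J2) (IH _ _ _ W1 W2 A1 A2).
Qed.

Lemma last_uniq_nil (T : eqType) (c : T) s : uniq (c :: s) -> last c s = c -> s = [::].
Proof.
case: s => // a s /= /andP[Hc _] Hl.
by move: Hc; rewrite -Hl (mem_last a s).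
Qed.

Lemma close_edge x c1 O' eso ec : uniq (x :: c1 :: O') -> is_walk x (c1 :: O') eso ->
  joins ec (last c1 O') x -> ec \in eso -> O' = [::].
Proof.
case: eso => [|e0 es'] // /andP[Hx Hu] /= /andP[J0 W] Jc.
rewrite inE => /orP[/eqP Ee|Hin].
  subst ec; rewrite joinsC in Jc; have := joins_inj J0 Jc => Hc.
  by apply: (last_uniq_nil Hu); rewrite -Hc.
have /andP[H1 H2] := walk_ends W Hin.
rewrite joinsC in Jc.
by case: (joins_end Jc) => Ex; rewrite -Ex ?H1 ?H2 in H1 H2; rewrite ?H1 ?H2 in Hx.
Qed.

Lemma DC x y y' p q : y != y' -> uniq (x :: y :: p) -> uniq (x :: y' :: q) ->
  path Rf x (y :: p) -> path Rf x (y' :: q) -> last y p = last y' q -> False.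
Proof.
move=> Nyy Up Uq Pp Pq Hl.
have hasPQ : has (mem (y' :: q)) (y :: p).
  apply/hasP; exists (last y p); first exact: mem_last.
  by rewrite /= Hl; exact: mem_last.
have [P EP] : {P | P = y :: p} by exists (y :: p).
have [Q EQ] : {Q | Q = y' :: q} by exists (y' :: q).
rewrite -EP in Up Pp hasPQ; rewrite -EQ in Uq Pq hasPQ.
case: (split_find hasPQ) EP Up Pp => z P1 P2 Hz HnP1 EP Up Pp.
case/splitPr: Hz EQ Uq Pq HnP1 => Q1 Q2 EQ Uq Pq HnP1.
set O := P1 ++ z :: rev Q1.
move: Up; rewrite /= cat_uniq rcons_uniq mem_cat mem_rcons inE !negb_or.
move: Uq; rewrite /= cat_uniq /= mem_cat inE !negb_or.
case/and5P => /and3P[Hx1 Hxz _] UQ1 /andP[HzQ1 _] _ _.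
case/and4P => /andP[/andP[_ HxP1] _] /andP[HzP1 UP1] _ _.
have DPQ : forall w, w \in P1 -> w \notin Q1.
  move=> w Hw; move/hasPn: HnP1 => /(_ w Hw) /=; by rewrite mem_cat negb_or => /andP[].
have UO : uniq (x :: O).
  rewrite /O /= cat_uniq /= mem_cat inE mem_rev rev_uniq !negb_or HxP1 Hxz Hx1 UP1.
  rewrite mem_rev HzQ1 UQ1 /= andbT HzP1 /=.
  apply/hasPn => w; rewrite mem_rev => Hw; apply/negP => /DPQ; by rewrite Hw.
have PO : path Rf x (rcons O x).
  rewrite /O rcons_cat cat_path rcons_cons /=.
  move: Pp; rewrite cat_path (rcons_path _ x P1) => /andP[/andP[-> ->] _] /=.
  have := rev_path Rf x (rcons Q1 z).
  rewrite last_rcons belast_rcons rev_cons => ->.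
  rewrite (eq_path (e' := Rf)); last by move=> a b /=; rewrite Rf_sym.
  by move: Pq; rewrite cat_path /= rcons_path => /andP[-> /andP[-> _]].
move: PO; rewrite rcons_path => /andP[PO' /existsP[ec /andP[Hec Jc]]].
have [eso [Wo Ao]] := path_walk PO'.
have Hsz := walk_size Wo.
have WC : is_walk x (rcons O x) (rcons eso ec) by rewrite -!cats1 walk_cat // Wo /= Jc.
have Hnin : ec \notin eso.
  apply/negP => Hin.
  move: UO Wo Jc Hin Hsz; rewrite /O; case E1: (P1 ++ z :: rev Q1) => [|c1 O'].
    by move/(congr1 size): E1; rewrite size_cat /= addnS.
  move=> UO Wo Jc Hin _; have HO' := close_edge UO Wo Jc Hin; subst O'.
  move: E1 => /(congr1 size); rewrite size_cat /= size_rev.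
  rewrite addnS => -[] /eqP; rewrite addn_eq0 => /andP[/eqP/size0nil HP1 /eqP/size0nil HQ1].
  rewrite HP1 /= in EP; rewrite HQ1 /= in EQ.
  case: EP => Ez _; case: EQ => Ez' _.
  by move: Nyy; rewrite -Ez -Ez' eqxx.
have := @HF (x, rcons O x, rcons eso ec).
rewrite /= WC last_rcons eqxx rcons_uniq rcons_uniq Hnin (walk_uniq_edges Wo UO).
move: UO => /= /andP[-> UO']; rewrite UO'.
have -> : (rcons eso ec != [::]) by case: (eso).
move=> /(_ isT); rewrite -cats1 has_cat /= orbF => /orP[/hasP[e He HeF]|HeF].
  by have := allP Ao e He; rewrite /nonF HeF.
by move: Hec; rewrite /nonF HeF.
Qed.

Lemma Tv p q x : uniq (x :: p) -> uniq (x :: q) -> path Rf x p -> path Rf x q ->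
  last x p = last x q -> p = q.
Proof.
elim: p q x => [|y p IH] [|y' q] x //.
- move=> _ /= /andP[Hx _] _ _ Hl; by move: Hx; rewrite Hl mem_last.
- move=> /= /andP[Hx _] _ _ _ Hl; by move: Hx; rewrite -Hl mem_last.
case: (y =P y') => [<-|/eqP Nyy] Up Uq Pp Pq Hl.
  congr (_ :: _); apply: (IH q y) => //.
  - by case/andP: Up.
  - by case/andP: Uq.
  - by case/andP: Pp.
  - by case/andP: Pq.
by case: (DC Nyy Up Uq Pp Pq Hl).
Qed.

Definition filterF (es : seq E) := [seq e <- es | e \in F].

Definition RM (M : pred V) : rel V := fun a b => [&& ~~ M a, ~~ M b & Rf a b].

Lemma RM_sym M : symmetric (RM M).
Proof. by move=> a b; rewrite /RM Rf_sym andbCA. Qed.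

Lemma conn_sym M a b : connect (RM M) a b = connect (RM M) b a.
Proof. exact: (sym_connect_sym (RM_sym M)). Qed.

Lemma step_conn M e a b : ~~ M a -> ~~ M b -> nonF e -> joins e a b ->
  connect (RM M) a b.
Proof.
move=> Ha Hb He J; apply: connect1; rewrite /RM Ha Hb /=.
by apply/existsP; exists e; rewrite He J.
Qed.

Lemma ML (M : pred V) n : forall u v vs1 es1 vs2 es2,
  size es1 + size es2 <= n -> is_walk u vs1 es1 -> is_walk v vs2 es2 ->
  last u vs1 = last v vs2 -> all (predC M) (u :: vs1) -> all (predC M) (v :: vs2) ->
  filterF es1 = filterF es2 -> ~~ connect (RM M) u v -> False.
Proof.
elim: n => [|n IH] u v vs1 es1 vs2 es2.
  case: es1 vs1 => [|? ?] [|? ?] //; case: es2 vs2 => [|? ?] [|? ?] //= _ _ _ Hl.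
  by move=> _ _ _; rewrite Hl connect0.
move=> Hn W1 W2 Hl A1 A2 Hf Hc.
have adv2 : forall e2 w2 es2' vs2', es2 = e2 :: es2' -> vs2 = w2 :: vs2' ->
    e2 \notin F -> False.
  move=> e2 w2 es2' vs2' E2 V2 He2; subst es2 vs2.
  move: W2 A2 Hf Hn => /= /andP[J2 W2] /and3P[Hv Hw2 A2] Hf Hn.
  apply: (IH u w2 vs1 es1 vs2' es2') => //.
  - by rewrite addnS in Hn.
  - by rewrite /= Hw2 A2.
  - by rewrite /filterF /= (negPf He2) in Hf.
  apply/negP => Hc'; move/negP: Hc; apply.
  apply: connect_trans Hc' _; rewrite conn_sym; exact: step_conn J2.
case: es1 vs1 W1 Hl A1 Hf Hn => [|e1 es1] [|w1 vs1] //= W1 Hl A1 Hf Hn.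
  case: es2 vs2 W2 Hl A2 Hf Hn adv2 => [|e2 es2] [|w2 vs2] //= W2 Hl A2 Hf Hn adv2.
    by move: Hc; rewrite Hl connect0.
  apply: (adv2 e2 w2 es2 vs2) => //; move: Hf; rewrite /filterF /=.
  by case: (e2 \in F).
move: W1 A1 => /andP[J1 W1] /and3P[Hu Hw1 A1].
case He1: (e1 \in F); last first.
  apply: (IH w1 v vs1 es1 vs2 es2) => //=.
  - by rewrite /= Hw1 A1.
  - by rewrite /filterF /= He1 in Hf.
  apply/negP => Hc'; move/negP: Hc; apply.
  exact: (connect_trans (step_conn Hu Hw1 (negbT He1) J1) Hc').
case: es2 vs2 W2 Hl A2 Hf Hn adv2 => [|e2 es2] [|w2 vs2] //= W2 Hl A2 Hf Hn adv2.
  by move: Hf; rewrite /filterF /= He1.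
case He2: (e2 \in F); last by apply: (adv2 e2 w2 es2 vs2); rewrite ?He2.
move: Hf; rewrite /filterF /= He1 He2 => -[Ee Hf]; subst e2.
move: W2 A2 => /andP[J2 W2] /and3P[Hv Hw2 A2].
have Nuv : u <> v by move=> Euv; move: Hc; rewrite Euv connect0.
have [Eu Ew] := joins_swap J1 J2 Nuv.
apply: (IH w1 w2 vs1 es1 vs2 es2) => //=.
- by rewrite addSn addnS ltnS in Hn; apply: ltnW.
- by rewrite Hw1 A1.
- by rewrite Hw2 A2.
by rewrite Ew -Eu conn_sym.
Qed.

Lemma nilF es : filterF es = [::] -> all nonF es.
Proof.
move=> H; apply/allP => e He; apply/negP => HeF.
have : e \in filterF es by rewrite mem_filter HeF He.
by rewrite H.
Qed.

Lemma split_F x vs es f sig : is_walk x vs es -> filterF es = f :: sig ->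
  exists Av Ae b Bv Be, [/\ vs = Av ++ b :: Bv, es = Ae ++ f :: Be, is_walk x Av Ae,
    all nonF Ae & [/\ joins f (last x Av) b, is_walk b Bv Be & filterF Be = sig]].
Proof.
elim: es x vs => [|e es IH] x [|w vs] //= /andP[J W]; rewrite /filterF /=.
case He: (e \in F) => /=; first by case=> <- <-; exists [::], [::], w, vs, es.
move=> Hf.
have [Av [Ae [b [Bv [Be [-> -> W' A' [J' W'' Hf']]]]]]] := IH _ _ W Hf.
exists (w :: Av), (e :: Ae), b, Bv, Be; split => //=.
- by rewrite J W'.
- by rewrite /nonF He.
Qed.

Lemma path_RM_all M h s : path (RM M) h s -> all (predC M) s.
Proof.
elim: s h => //= a s IH h /andP[/and3P[_ Ha _] /IH ->]; by rewrite Ha.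
Qed.

Lemma suffix_from (e : rel V) h s z : path e h s -> z \in h :: s -> uniq (h :: s) ->
  exists R2, [/\ path e z R2, last z R2 = last h s, {subset z :: R2 <= h :: s}
     & uniq (z :: R2)].
Proof.
elim: s h => [|a s IH] h.
  by move=> _; rewrite mem_seq1 => /eqP-> _; exists [::]; split => // w.
move=> /= /andP[He P]; rewrite in_cons => /orP[/eqP->|Hz] U.
  by exists (a :: s); split => //=; rewrite He.
have [R2 [P2 L2 S2 U2]] := IH a P Hz (proj2 (andP U)).
exists R2; split => // w /S2 Hw; by rewrite inE Hw orbT.
Qed.

Lemma Main sig : forall x vs1 es1 vs2 es2, filterF es1 = sig -> filterF es2 = sig ->
  is_walk x vs1 es1 -> is_walk x vs2 es2 -> uniq (x :: vs1) -> uniq (x :: vs2) ->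
  last x vs1 = last x vs2 -> vs1 = vs2 /\ es1 = es2.
Proof.
elim: sig => [|f sig IH] x vs1 es1 vs2 es2 Hf1 Hf2 W1 W2 U1 U2 Hl.
  have A1 := nilF Hf1; have A2 := nilF Hf2.
  have Ev := Tv U1 U2 (walk_path W1 A1) (walk_path W2 A2) Hl.
  subst vs2; split => //; exact: same_edges W1 W2 A1 A2.
have [A1v [A1e [b1 [B1v [B1e [Ev1 Ee1 WA1 AA1 [J1 WB1 HB1]]]]]]] := split_F W1 Hf1.
have [A2v [A2e [b2 [B2v [B2e [Ev2 Ee2 WA2 AA2 [J2 WB2 HB2]]]]]]] := split_F W2 Hf2.
subst vs1 es1 vs2 es2.
move: U1; rewrite -cat_cons cat_uniq => /and3P[UA1 D1 UB1].
move: U2; rewrite -cat_cons cat_uniq => /and3P[UA2 D2 UB2].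
rewrite !last_cat /= in Hl.
case: (last x A1v =P last x A2v) => [Ea|Na].
  have EA := Tv UA1 UA2 (walk_path WA1 AA1) (walk_path WA2 AA2) Ea.
  subst A2v.
  have EAe := same_edges WA1 WA2 AA1 AA2; subst A2e.
  have Eb := joins_inj J1 J2; subst b2.
  have [-> ->] := IH b1 B1v B1e B2v B2e HB1 HB2 WB1 WB2 UB1 UB2 Hl.
  by [].
exfalso.
have [Ea1 Eb1] := joins_swap J1 J2 Na.
set a1 := last x A1v in Ea1 J1 Na *.
set a2 := last x A2v in Eb1 J2 Na *.
pose M : pred V := fun z => (z \in x :: A1v) && (z \in x :: A2v).
have NM1 : forall z, z \in b1 :: B1v -> ~~ M z.
  move=> z Hz; apply/negP => /andP[Hz1 _].
  by move/hasPn: D1 => /(_ z Hz) /=; rewrite Hz1.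
have NM2 : forall z, z \in b2 :: B2v -> ~~ M z.
  move=> z Hz; apply/negP => /andP[_ Hz2].
  by move/hasPn: D2 => /(_ z Hz) /=; rewrite Hz2.
have NC : ~~ connect (RM M) a2 a1.
  apply/negP => /connectP[p Pp Hlp].
  move: Hlp; case: (shortenP Pp) => p' Pp' Up' Sub' Hlp.
  have AR : all (predC M) (a2 :: p').
    rewrite /= (path_RM_all Pp') andbT; apply: NM1; by rewrite -Eb1 mem_head.
  have hasB : has (mem (a2 :: p')) (x :: A2v).
    apply/hasP; exists a2; [exact: mem_last | exact: mem_head].
  have [B EB] : {B | B = x :: A2v} by exists (x :: A2v).
  rewrite -EB in hasB.
  case: (split_find hasB) EB => z B1 B2 Hz HnB1 EB.
  have HzA2 : z \in x :: A2v by rewrite -EB mem_cat mem_rcons mem_head.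
  suff HzA1 : z \in x :: A1v.
    by have := allP AR z Hz; rewrite /= /M HzA1 HzA2.
  case: B1 EB HnB1 => [|x' B1'] /=.
    by case=> -> _ _; exact: mem_head.
  case=> Ex' EA2 HnB1; subst x'.
  have HnB : ~~ has (mem (a2 :: p')) (x :: B1') := HnB1.
  have [R2 [PR2 LR2 SR2 UR2]] := suffix_from Pp' Hz Up'.
  have UN : uniq (x :: B1' ++ z :: R2).
    move: UA2; rewrite -EA2 -cat_cons -rcons_cons cat_uniq rcons_uniq => /andP[/andP[_ U1] _].
    rewrite -cat_cons cat_uniq U1 UR2 andbT andTb.
    apply/hasPn => w Hw; apply/negP => Hw'.
    by move/hasPn: HnB => /(_ w Hw') /=; rewrite (SR2 w Hw).
  have PN : path Rf x (B1' ++ z :: R2).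
    rewrite cat_path /=.
    have := walk_path WA2 AA2; rewrite -EA2 cat_path rcons_path => /andP[/andP[-> ->] _] /=.
    by apply: sub_path PR2 => a b /and3P[_ _ ->].
  have LN : last x A1v = last x (B1' ++ z :: R2) by rewrite last_cat /= LR2 -Hlp.
  have EA := Tv UA1 UN (walk_path WA1 AA1) PN LN.
  by rewrite EA -cat_cons mem_cat mem_head orbT.
apply: (@ML M (size B1e + size B2e) _ _ _ _ _ _ (leqnn _) WB1 WB2 Hl).
- by apply/allP => z /NM1.
- by apply/allP => z /NM2.
- by rewrite HB1 HB2.
by rewrite Eb1 -Ea1.
Qed.

End Proof.

Theorem mainTheorem11 (V E : finType) (ends : E -> V * V) (s t : V)
  (Hred : reduced ends s t) (F : {set E}) (HF : feedback_edge_set ends F) :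
  tracking_edge_set ends s t F.
Proof.
move=> [[x1 vs1] es1] [[x2 vs2] es2] /and4P[/eqP E1 /eqP L1 W1 U1]
  /and4P[/eqP E2 /eqP L2 W2 U2] Hne Hf.
subst x1 x2; apply: Hne.
have Hl : last s vs1 = last s vs2 by rewrite L1 L2.
have Hf' : filterF F es1 = filterF F es2 := Hf.
have [-> ->] := Main HF Hf' erefl W1 W2 U1 U2 Hl.
by [].
Qed.
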